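(* Let $a,c,d$ be generic parameters. Define $\alpha_0^*=\beta_0^*=\alpha_0^\dagger=\beta_0^\dagger=1$ and, for $n\ge1$, \begin{align*} \alpha_n^*&=\frac{(aq,c,d;q)_n}{(aq^2/c,aq^2/d,q;q)_n}\Big(\frac{-aq}{cd}\Big)^n q^{(n^2+n)/2}- aq^{2n-1}\frac{(aq,c,d;q)_{n-1}}{(aq^2/c,aq^2/d,q;q)_{n-1}}\Big(\frac{-aq}{cd}\Big)^{n-1} q^{(n^2-n)/2},\\ \beta_n^*&=\frac{(aq^2/cd;q)_n}{(aq^2/c,aq^2/d,q;q)_n},\\ \alpha_n^{\dagger}&=q^n\frac{(aq,c,d;q)_n}{(aq^2/c,aq^2/d,q;q)_n}\Big(\frac{-aq}{cd}\Big)^n q^{(n^2+n)/2}- q^{n-1}\frac{(aq,c,d;q)_{n-1}}{(aq^2/c,aq^2/d,q;q)_{n-1}}\Big(\frac{-aq}{cd}\Big)^{n-1} q^{(n^2-n)/2},\\ \beta_n^{\dagger}&=q^n\frac{(aq^2/cd;q)_n}{(aq^2/c,aq^2/d,q;q)_n}. \end{align*} Then $(\alpha_n^*,\beta_n^* )$ and $(\alpha_n^\dagger,\beta_n^\dagger)$ are Bailey pairs relative to $a$.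
   Context: Notation: $(x;q)_n=\prod_{i=0}^{n-1}(1-xq^i)$, $(x_1,\dots,x_j;q)_n=(x_1;q)_n\cdots(x_j;q)_n$. A pair of sequences $(\alpha_n,\beta_n)_{n\ge0}$ is a Bailey pair relative to $a$ if $\alpha_0=1$ and for all $n\ge0$, $\beta_n=\sum_{r=0}^n\frac{\alpha_r}{(q;q)_{n-r}(aq;q)_{n+r}}$. *)

(* Defs.v *)
From HB Require Import structures.
From mathcomp Require Import all_boot all_order all_algebra.
Set Implicit Arguments. Unset Strict Implicit. Unset Printing Implicit Defensive.
Import Order.TTheory GRing.Theory Num.Theory.
Local Open Scope ring_scope.

Definition qpoch {F : fieldType} (x q : F) (n : nat) : F :=
  \prod_(i < n) (1 - x * q ^+ i).

Definition bailey_pair {F : fieldType} (q a : F) (alpha beta : nat -> F) : Prop :=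
  alpha 0%N = 1 /\
  forall n : nat, beta n =
    \sum_(r < n.+1) alpha r / (qpoch q q (n - r) * qpoch (a * q) q (n + r)).

Definition ratio {F : fieldType} (q a c d : F) (k : nat) : F :=
  (qpoch (a * q) q k * qpoch c q k * qpoch d q k) /
  (qpoch (a * q ^+ 2 / c) q k * qpoch (a * q ^+ 2 / d) q k * qpoch q q k).

Definition alpha_star {F : fieldType} (q a c d : F) (n : nat) : F :=
  match n with
  | 0%N => 1
  | _ =>
    ratio q a c d n * (- (a * q) / (c * d)) ^+ n * q ^+ ((n * n + n) %/ 2)
    - a * q ^+ (2 * n - 1) * ratio q a c d (n - 1)
        * (- (a * q) / (c * d)) ^+ (n - 1) * q ^+ ((n * n - n) %/ 2)
  end.

Definition beta_star {F : fieldType} (q a c d : F) (n : nat) : F :=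
  match n with
  | 0%N => 1
  | _ => qpoch (a * q ^+ 2 / (c * d)) q n /
         (qpoch (a * q ^+ 2 / c) q n * qpoch (a * q ^+ 2 / d) q n * qpoch q q n)
  end.

Definition alpha_dag {F : fieldType} (q a c d : F) (n : nat) : F :=
  match n with
  | 0%N => 1
  | _ =>
    q ^+ n * ratio q a c d n * (- (a * q) / (c * d)) ^+ n * q ^+ ((n * n + n) %/ 2)
    - q ^+ (n - 1) * ratio q a c d (n - 1)
        * (- (a * q) / (c * d)) ^+ (n - 1) * q ^+ ((n * n - n) %/ 2)
  end.

Definition beta_dag {F : fieldType} (q a c d : F) (n : nat) : F :=
  match n with
  | 0%N => 1
  | _ => q ^+ n * qpoch (a * q ^+ 2 / (c * d)) q n /
         (qpoch (a * q ^+ 2 / c) q n * qpoch (a * q ^+ 2 / d) q n * qpoch q q n)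
  end.

(* Main.v *)
Require Import Defs.
From HB Require Import structures.
From mathcomp Require Import all_boot all_order all_algebra.
From mathcomp Require Import zify ring lra.
Import GRing.Theory.
Local Open Scope ring_scope.

Lemma qpochS {F : fieldType} (x q : F) k : qpoch x q k.+1 = qpoch x q k * (1 - x * q ^+ k).
Proof. by rewrite /qpoch big_ord_recr. Qed.
Lemma qpoch0 {F : fieldType} (x q : F) : qpoch x q 0 = 1.
Proof. by rewrite /qpoch big_ord0. Qed.

Lemma tri s : ((s.+1 * s.+1 + s.+1) %/ 2 = (s * s + s) %/ 2 + s.+1)%N.
Proof.
have -> : (s.+1 * s.+1 + s.+1 = s.+1 * 2 + (s * s + s))%N by nia.
by rewrite divnMDl // addnC.
Qed.

Definition Ac {F : fieldType} (q a c d : F) r :=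
  Defs.ratio q a c d r * (- (a * q) / (c * d)) ^+ r * q ^+ ((r * r + r) %/ 2)%N.
Definition Tt {F : fieldType} (q a c d : F) n r :=
  Ac q a c d r * (1 - a * q * q ^+ (r + r)%N) / (qpoch q q (n - r) * qpoch (a * q) q (n + r)%N.+1).
Definition Bb {F : fieldType} (q a c d : F) n :=
  qpoch (a * q ^+ 2 / (c * d)) q n /
         (qpoch (a * q ^+ 2 / c) q n * qpoch (a * q ^+ 2 / d) q n * qpoch q q n).
Definition Ee {F : fieldType} (q a c d : F) s :=
  qpoch (a * q) q s.+1 * qpoch c q s.+1 * qpoch d q s.+1 /
  (qpoch (a * q ^+ 2 / c) q s * qpoch (a * q ^+ 2 / d) q s * qpoch q q s)
  * (- (a * q) / (c * d)) ^+ s * q ^+ ((s * s + s) %/ 2)%N.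
Definition lam {F : fieldType} (q a c d : F) n :=
  (1 - a * q ^+ 2 / (c * d) * q ^+ n) /
  ((1 - a * q ^+ 2 / c * q ^+ n) * (1 - a * q ^+ 2 / d * q ^+ n) * (1 - q * q ^+ n)).
Definition mu {F : fieldType} (q a c d : F) n :=
  a * q ^+ 2 * q ^+ n /
  (c * d * (1 - q * q ^+ n) * (1 - a * q ^+ 2 / c * q ^+ n) * (1 - a * q ^+ 2 / d * q ^+ n)).
Definition Hh {F : fieldType} (q a c d : F) n r :=
  match r with
  | 0%N => 0
  | s.+1 => mu q a c d n * Ee q a c d s / (qpoch q q (n - s) * qpoch (a * q) q (n + s)%N.+2)
  end.

Lemma Tt_eq {F : fieldType} (q a c d : F) n r k l :
  (n - r = k)%N -> (n + r = l)%N ->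
  Tt q a c d n r = Ac q a c d r * (1 - a * q * q ^+ (r + r)%N) / (qpoch q q k * qpoch (a * q) q l.+1).
Proof. by move=> <- <-. Qed.
Lemma Hh_eq {F : fieldType} (q a c d : F) n s k l :
  (n - s = k)%N -> (n + s = l)%N ->
  Hh q a c d n s.+1 = mu q a c d n * Ee q a c d s / (qpoch q q k * qpoch (a * q) q l.+2).
Proof. by move=> <- <-. Qed.

Lemma qpoch_nz {F : fieldType} (x q : F) k :
  (forall i, 1 - x * q ^+ i != 0) -> qpoch x q k != 0.
Proof.
move=> h; elim: k => [|k ih]; first by rewrite qpoch0 oner_neq0.
by rewrite qpochS mulf_neq0.
Qed.

Ltac nzw h :=
  move: h; apply: contra_neq; let E0 := fresh "E0" in intro E0;
  match goal with |- ?X = 0 => match type of E0 with ?Y = 0 =>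
    first [ have -> : X = Y by (do 3 rewrite ?exprS ?exprD; rewrite ?expr0 ?mulr1; field)
          | have -> : X = Y / c by (do 3 rewrite ?exprS ?exprD; rewrite ?expr0 ?mulr1; field)
          | have -> : X = Y / d by (do 3 rewrite ?exprS ?exprD; rewrite ?expr0 ?mulr1; field) ];
    rewrite E0 ?mul0r //
  end end.

Lemma step_mid {F : fieldType} (q a c d : F) n s
  (hq : q != 0) (hc : c != 0) (hd : d != 0)
  (hqq : forall i : nat, 1 - q ^+ i.+1 != 0)
  (haq : forall i : nat, 1 - a * q ^+ i.+1 != 0)
  (hac : forall i : nat, 1 - a * q ^+ 2 / c * q ^+ i != 0)
  (had : forall i : nat, 1 - a * q ^+ 2 / d * q ^+ i != 0) :
  (s < n)%N ->
  Tt q a c d n.+1 s.+1 - lam q a c d n * Tt q a c d n s.+1 =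
  Hh q a c d n s.+2 - Hh q a c d n s.+1.
Proof.
move=> hsn; have [m ->] : exists m, n = (s + m).+1 by exists (n - s.+1)%N; lia.
rewrite (Tt_eq _ _ _ _ _ _ m.+1 (s + m + s).+3); [|lia|lia].
rewrite (Tt_eq _ _ _ _ _ _ m (s + m + s).+2); [|lia|lia].
rewrite (Hh_eq _ _ _ _ _ _ m (s + m + s).+2); [|lia|lia].
rewrite (Hh_eq _ _ _ _ _ _ m.+1 (s + m + s).+1); [|lia|lia].
rewrite /Ac /Ee /Defs.ratio /lam /mu tri.
rewrite !qpochS; do 3 rewrite ?exprS ?exprD; rewrite ?expr0.
field.
have hQ k : qpoch q q k != 0 by apply: qpoch_nz => i; rewrite -exprS.
have hA k : qpoch (a * q) q k != 0 by apply: qpoch_nz => i; rewrite -mulrA -exprS.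
have hC k : qpoch (a * q ^+ 2 / c) q k != 0 by apply: qpoch_nz.
have hD k : qpoch (a * q ^+ 2 / d) q k != 0 by apply: qpoch_nz.
rewrite ?mulr1 -?expr2 hc hd !hQ !hA !hC !hD /=.
repeat (apply/andP; split);
  [ nzw (haq (s + m + s).+2) | nzw (haq (s + m + s).+1) | nzw (haq (s + m + s))
  | nzw (hqq m) | nzw (had (s + m).+1) | nzw (hac (s + m).+1) | nzw (hqq (s + m).+1)
  | nzw (haq (s + m + s).+3) | nzw (hqq s) | nzw (had s) | nzw (hac s) ].
Qed.

Lemma step0 {F : fieldType} (q a c d : F) n
  (hq : q != 0) (hc : c != 0) (hd : d != 0)
  (hqq : forall i : nat, 1 - q ^+ i.+1 != 0)
  (haq : forall i : nat, 1 - a * q ^+ i.+1 != 0)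
  (hac : forall i : nat, 1 - a * q ^+ 2 / c * q ^+ i != 0)
  (had : forall i : nat, 1 - a * q ^+ 2 / d * q ^+ i != 0) :
  Tt q a c d n.+1 0 - lam q a c d n * Tt q a c d n 0 =
  Hh q a c d n 1 - Hh q a c d n 0.
Proof.
rewrite (Tt_eq _ _ _ _ _ _ n.+1 n.+1); [|lia|lia].
rewrite (Tt_eq _ _ _ _ _ _ n n); [|lia|lia].
rewrite (Hh_eq _ _ _ _ _ _ n n); [|lia|lia].
rewrite /Ac /Ee /Defs.ratio /lam /mu /= subr0.
rewrite !qpochS ?qpoch0; do 3 rewrite ?exprS ?exprD; rewrite ?expr0.
field.
have hQ k : qpoch q q k != 0 by apply: qpoch_nz => i; rewrite -exprS.
have hA k : qpoch (a * q) q k != 0 by apply: qpoch_nz => i; rewrite -mulrA -exprS.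
rewrite ?mulr1 -?expr2 hc hd !hQ !hA oner_neq0 /=.
repeat (apply/andP; split);
  [ nzw (haq n.+1) | nzw (haq n) | nzw (had n) | nzw (hac n) | nzw (hqq n) ].
Qed.

Lemma step_last {F : fieldType} (q a c d : F) n
  (hq : q != 0) (hc : c != 0) (hd : d != 0)
  (hqq : forall i : nat, 1 - q ^+ i.+1 != 0)
  (haq : forall i : nat, 1 - a * q ^+ i.+1 != 0)
  (hac : forall i : nat, 1 - a * q ^+ 2 / c * q ^+ i != 0)
  (had : forall i : nat, 1 - a * q ^+ 2 / d * q ^+ i != 0) :
  Tt q a c d n.+1 n.+1 = - Hh q a c d n n.+1.
Proof.
rewrite (Tt_eq _ _ _ _ _ _ 0 (n + n).+2); [|lia|lia].
rewrite (Hh_eq _ _ _ _ _ _ 0 (n + n)); [|lia|lia].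
rewrite /Ac /Ee /Defs.ratio /lam /mu tri.
rewrite !qpochS ?qpoch0; do 3 rewrite ?exprS ?exprD; rewrite ?expr0.
field.
have hQ k : qpoch q q k != 0 by apply: qpoch_nz => i; rewrite -exprS.
have hA k : qpoch (a * q) q k != 0 by apply: qpoch_nz => i; rewrite -mulrA -exprS.
have hC k : qpoch (a * q ^+ 2 / c) q k != 0 by apply: qpoch_nz.
have hD k : qpoch (a * q ^+ 2 / d) q k != 0 by apply: qpoch_nz.
rewrite ?mulr1 -?expr2 hc hd !hQ !hA ?hC ?hD /=.
repeat (apply/andP; split);
  [ nzw (haq (n + n).+1) | nzw (haq (n + n)) | nzw (had n) | nzw (hac n) | nzw (hqq n)
  | nzw (haq (n + n).+2) ].
Qed.

Lemma Bb_succ {F : fieldType} (q a c d : F) n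
  (hq : q != 0) (hc : c != 0) (hd : d != 0)
  (hqq : forall i : nat, 1 - q ^+ i.+1 != 0)
  (hac : forall i : nat, 1 - a * q ^+ 2 / c * q ^+ i != 0)
  (had : forall i : nat, 1 - a * q ^+ 2 / d * q ^+ i != 0) :
  Bb q a c d n.+1 = lam q a c d n * Bb q a c d n.
Proof.
have hQ k : qpoch q q k != 0 by apply: qpoch_nz => i; rewrite -exprS.
have hC k : qpoch (a * q ^+ 2 / c) q k != 0 by apply: qpoch_nz.
have hD k : qpoch (a * q ^+ 2 / d) q k != 0 by apply: qpoch_nz.
have h1 := hqq n; rewrite exprS in h1.
rewrite /Bb /lam !qpochS; field.
rewrite hQ hC hD h1 hc hd /=.
by apply/andP; split; [nzw (had n) | nzw (hac n)].
Qed.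

Lemma core {F : fieldType} (q a c d : F) n
  (hq : q != 0) (hc : c != 0) (hd : d != 0)
  (hqq : forall i : nat, 1 - q ^+ i.+1 != 0)
  (haq : forall i : nat, 1 - a * q ^+ i.+1 != 0)
  (hac : forall i : nat, 1 - a * q ^+ 2 / c * q ^+ i != 0)
  (had : forall i : nat, 1 - a * q ^+ 2 / d * q ^+ i != 0) :
  \sum_(r < n.+1) Tt q a c d n r = Bb q a c d n.
Proof.
elim: n => [|n IH].
  have h0 := haq 0; rewrite expr1 in h0.
  rewrite big_ord1 /Tt /Bb /Ac /Defs.ratio /= ?qpochS ?qpoch0 ?expr0.
  by field; rewrite oner_neq0 h0.
have E : \sum_(r < n.+1) (Tt q a c d n.+1 r - lam q a c d n * Tt q a c d n r)
         = Hh q a c d n n.+1 - Hh q a c d n 0.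
  rewrite -(big_mkord xpredT (fun r => Tt q a c d n.+1 r - lam q a c d n * Tt q a c d n r)).
  apply: telescope_sumr_eq => // k /andP[_ hk].
  case: k hk => [|s] hs; first exact: step0.
  by apply: step_mid => //; lia.
rewrite big_ord_recr /= step_last // Bb_succ //.
move: E; rewrite sumrB -mulr_sumr IH /= => E.
by rewrite -(subrK (lam q a c d n * Bb q a c d n) (\sum_(i < n.+1) _)) E subr0 addrC addrA addNr add0r.
Qed.


Lemma abel {F : fieldType} (al X Y T den : nat -> F) n :
  al 0%N = X 0%N -> (forall s, al s.+1 = X s.+1 - Y s) ->
  (forall s, (s < n)%N -> T s = X s * den s - Y s * den s.+1) -> T n = X n * den n ->
  \sum_(r < n.+1) al r * den r = \sum_(r < n.+1) T r.
Proof.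
move=> h0 hS hT hn.
have -> : \sum_(r < n.+1) al r * den r = \sum_(r < n.+1) X r * den r
    - \sum_(r < n.+1) (if val r is s.+1 then Y s else 0) * den r.
  rewrite -sumrB; apply: eq_bigr => -[[|s] hs] _ /=.
    by rewrite h0 mul0r subr0.
  by rewrite hS mulrBl.
rewrite [X in _ - X]big_ord_recl /= mul0r add0r [X in X - _]big_ord_recr /= [RHS]big_ord_recr /= hn.
rewrite [in RHS](eq_bigr (fun i : 'I_n => X i * den i - Y i * den i.+1)); last first.
  by move=> i _; rewrite hT.
rewrite sumrB.
have -> : \sum_(i < n) Y (0 + i)%N * den (bump 0 i) = \sum_(i < n) Y i * den i.+1.
  by apply: eq_bigr => i _; rewrite /bump /= add0n.
by rewrite addrAC.
Qed.



Definition den {F : fieldType} (q a : F) n r := (qpoch q q (n - r) * qpoch (a * q) q (n + r))^-1.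

Lemma tsplit {F : fieldType} (q a c d : F) n s
  (hq : q != 0)
  (hqq : forall i : nat, 1 - q ^+ i.+1 != 0)
  (haq : forall i : nat, 1 - a * q ^+ i.+1 != 0) :
  (s < n)%N ->
  Tt q a c d n s = Ac q a c d s * den q a n s - a * q ^+ (s + s).+1 * Ac q a c d s * den q a n s.+1 /\
  q ^+ n * Tt q a c d n s = q ^+ s * Ac q a c d s * den q a n s - q ^+ s * Ac q a c d s * den q a n s.+1.
Proof.
move=> hsn; have [m ->] : exists m, n = (s + m).+1 by exists (n - s.+1)%N; lia.
rewrite (Tt_eq _ _ _ _ _ _ m.+1 (s + m + s).+1); [|lia|lia].
rewrite /den (_ : ((s + m).+1 - s = m.+1)%N); last by lia.
rewrite (_ : ((s + m).+1 + s = (s + m + s).+1)%N); last by lia.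
rewrite (_ : ((s + m).+1 - s.+1 = m)%N); last by lia.
rewrite (_ : ((s + m).+1 + s.+1 = (s + m + s).+2)%N); last by lia.
have hQ k : qpoch q q k != 0 by apply: qpoch_nz => i; rewrite -exprS.
have hA k : qpoch (a * q) q k != 0 by apply: qpoch_nz => i; rewrite -mulrA -exprS.
rewrite !qpochS; do 3 rewrite ?exprS ?exprD; rewrite ?expr0.
split; field; rewrite ?mulr1 -?expr2 !hQ !hA /=;
  by repeat (apply/andP; split); [ nzw (haq (s + m + s).+1) | nzw (haq (s + m + s)) | nzw (hqq m) ].
Qed.

Lemma tlast {F : fieldType} (q a c d : F) n
  (hqq : forall i : nat, 1 - q ^+ i.+1 != 0)
  (haq : forall i : nat, 1 - a * q ^+ i.+1 != 0) :
  Tt q a c d n n = Ac q a c d n * den q a n n.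
Proof.
rewrite (Tt_eq _ _ _ _ _ _ 0 (n + n)); [|lia|lia].
rewrite /den subnn.
have hQ k : qpoch q q k != 0 by apply: qpoch_nz => i; rewrite -exprS.
have hA k : qpoch (a * q) q k != 0 by apply: qpoch_nz => i; rewrite -mulrA -exprS.
have h1 : 1 - a * q * q ^+ (n + n) != 0 by rewrite -mulrA -exprS.
rewrite qpochS; field.
by rewrite !hQ !hA h1.
Qed.

Lemma alpha_star_S {F : fieldType} (q a c d : F) s :
  alpha_star q a c d s.+1 = Ac q a c d s.+1 - a * q ^+ (s + s).+1 * Ac q a c d s.
Proof.
rewrite /alpha_star /Ac.
rewrite (_ : (2 * s.+1 - 1 = (s + s).+1)%N); last by lia.
rewrite (_ : (s.+1 - 1 = s)%N); last by lia.
rewrite (_ : (s.+1 * s.+1 - s.+1 = s * s + s)%N); last by nia.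
by rewrite !mulrA.
Qed.

Lemma alpha_dag_S {F : fieldType} (q a c d : F) s :
  alpha_dag q a c d s.+1 = q ^+ s.+1 * Ac q a c d s.+1 - q ^+ s * Ac q a c d s.
Proof.
rewrite /alpha_dag /Ac.
rewrite (_ : (s.+1 - 1 = s)%N); last by lia.
rewrite (_ : (s.+1 * s.+1 - s.+1 = s * s + s)%N); last by nia.
by rewrite !mulrA.
Qed.


Lemma Ac0 {F : fieldType} (q a c d : F) : Ac q a c d 0 = 1.
Proof. by rewrite /Ac /Defs.ratio !qpoch0 !expr0 !mulr1 invr1 mulr1. Qed.
Lemma Bb0 {F : fieldType} (q a c d : F) : Bb q a c d 0 = 1.
Proof. by rewrite /Bb !qpoch0 !mulr1 invr1 mulr1. Qed.

Theorem mainTheorem5 (F : fieldType) (q a c d : F)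
  (hq : q != 0) (hc : c != 0) (hd : d != 0)
  (hqq : forall i : nat, 1 - q ^+ i.+1 != 0)
  (haq : forall i : nat, 1 - a * q ^+ i.+1 != 0)
  (hac : forall i : nat, 1 - a * q ^+ 2 / c * q ^+ i != 0)
  (had : forall i : nat, 1 - a * q ^+ 2 / d * q ^+ i != 0) :
  bailey_pair q a (alpha_star q a c d) (beta_star q a c d) /\
  bailey_pair q a (alpha_dag q a c d) (beta_dag q a c d).
Proof.
split; split => // n.
  have E := @abel F (alpha_star q a c d) (Ac q a c d)
    (fun s => a * q ^+ (s + s).+1 * Ac q a c d s) (Tt q a c d n) (den q a n) n.
  rewrite /den in E; rewrite E; first last.
  - by rewrite tlast.
  - by move=> s hs; case: (tsplit q a c d n s hq hqq haq hs).
  - exact: alpha_star_S.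
  - by rewrite Ac0.
  rewrite core //.
  by clear E; case: n => [|n]; rewrite ?Bb0.
have E := @abel F (alpha_dag q a c d) (fun r => q ^+ r * Ac q a c d r)
    (fun s => q ^+ s * Ac q a c d s) (fun r => q ^+ n * Tt q a c d n r) (den q a n) n.
rewrite /den in E; rewrite E; first last.
- by rewrite tlast // mulrA.
- by move=> s hs; case: (tsplit q a c d n s hq hqq haq hs).
- exact: alpha_dag_S.
- by rewrite Ac0 expr0 mulr1.
rewrite -mulr_sumr core //.
clear E; case: n => [|n]; first by rewrite Bb0 expr0 mulr1.
by rewrite /beta_dag /Bb mulrA.
Qed.
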